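(* Assume $\mathrm{recc}(C)\subseteq\mathrm{recc}(P^B)$. Then $$P^B\setminus T^C=\bigcup_{k\in N_2\cup\{0\}}\big(P^B\setminus S_k^C\big).$$
   Context: Let $A\in\mathbb{R}^{m\times n}$ have full row rank, $b\in\mathbb{R}^m$, and $P=\{x\in\mathbb{R}^n_+ : Ax=b\}$. Let $C\subseteq\mathbb{R}^n$ be an open convex set. Fix a basis $B\subseteq\{1,\dots,n\}$ of $P$ with nonbasic set $N=\{1,\dots,n\}\setminus B$. Write $P=\{x: x_i=\bar b_i-\sum_{j\in N}\bar a_{ij}x_j\ (i\in B),\ x_j\ge0\ (j=1,\dots,n)\}$ with $\bar b\ge0$. The basic solution $\bar x$ has $\bar x_i=\bar b_i$ ($i\in B$) and $\bar x_i=0$ ($i\in N$). $P^B$ is obtained by dropping the constraints $x_i\ge0$ for $i\in B$. For $j\in N$, $\bar r^j$ is given by $\bar r^j_k=-\bar a_{kj}$ ($k\in B$), $\bar r^j_j=1$, and $\bar r^j_k=0$ ($k\in N\setminus\{j\}$). Thus $P^B=\{\bar x+\sum_{j\in N}x_j\bar r^j: x_j\ge0\}$, a translated simplicial cone with linearly independent extreme rays $\bar r^j$. It is assumed that $\bar x\notin\mathrm{cl}(C)$. For $j\in N$, $\alpha_j=\inf\{\lambda\ge0:\bar x+\lambda\bar r^j\in C\}$ and $\beta_j=\sup\{\lambda\ge0:\bar x+\lambda\bar r^j\in C\}$, with $\alpha_j=+\infty$, $\beta_j=-\infty$ if that halfline misses $C$. The set $N$ is partitioned into - $N_0=\{j:\alpha_j=+\infty,\beta_j=-\infty\}$,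 - $N_1=\{j:\alpha_j\in(0,\infty),\beta_j=+\infty\}$, - $N_2=\{j:\alpha_j\in(0,\infty),\beta_j\in(\alpha_j,\infty)\}$. Let $N_{12}=N_1\cup N_2$. For a set $K$, $\mathrm{recc}(K)=\{d: x+\lambda d\in K\ \forall x\in K,\lambda\ge0\}$. Define - $T^C=\{\bar x\}+\mathrm{conv}\big(\bigcup_{j\in N_{12}}\{\lambda\bar r^j:\alpha_j<\lambda<\beta_j\}\big)+\mathrm{recc}(C)$; - $S_0^C=\{\bar x\}+\mathrm{conv}\big(\bigcup_{j\in N_{12}}\{\lambda\bar r^j:\lambda>\alpha_j\}\big)+\mathrm{recc}(C)$; - for each $k\in N_2$, $S_k^C=\{\bar x\}+\mathrm{conv}\big(\bigcup_{j\in N_2}\{\lambda\bar r^j:0\le\lambda<\beta_j\}\big)+\{\lambda\bar r^k:\lambda\le0\}+\mathrm{recc}(C)$. (The index $0$ is not an element of $N$.) *)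

(* Defs.v *)
From HB Require Import structures.
From mathcomp Require Import all_boot all_order all_algebra.
From mathcomp Require Import all_classical all_reals all_analysis.
Set Implicit Arguments. Unset Strict Implicit. Unset Printing Implicit Defensive.
Import Order.TTheory GRing.Theory Num.Theory.
Import numFieldNormedType.Exports.
Local Open Scope classical_set_scope.
Local Open Scope ring_scope.

(* Points of R^n are column vectors 'cV[R]_n (with the matrix topology of
   mathcomp-analysis).  Coordinates x_i are written  x i 0. *)
Section Defs.
Variables (R : realType) (m n : nat).
Local Notation vec := 'cV[R]_n.

Definition recc (K : set vec) : set vec :=
  [set d | forall x lam, K x -> 0 <= lam -> K (x + lam *: d)].

Definition conv_hull (S : set vec) : set vec :=
  [set x | exists (k : nat) (p : 'I_k -> vec) (w : 'I_k -> R),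
      [/\ forall i, S (p i), forall i, 0 <= w i, \sum_(i < k) w i = 1
        & x = \sum_(i < k) w i *: p i]].

Definition msum (X Y : set vec) : set vec :=
  [set z | exists x y, [/\ X x, Y y & z = x + y]].

Variables (A : 'M[R]_(m, n)) (b : 'cV[R]_m) (B : {set 'I_n}).

Definition polyP : set vec := [set x | A *m x = b /\ forall i, 0 <= x i 0].

(* B is a basis: |B| = m and the columns of A indexed by B are linearly
   independent (i.e. A_B is invertible). *)
Definition is_basis : Prop :=
  #|B| = m /\ forall x : vec, (forall j, j \notin B -> x j 0 = 0) ->
                              A *m x = 0 -> x = 0.

(* basic solution xbar: the unique x with Ax = b, x_N = 0
   (i.e. xbar_B = bbar = A_B^{-1} b, xbar_N = 0). *)
Definition xbar : vec :=
  xget 0 [set x | A *m x = b /\ forall j, j \notin B -> x j 0 = 0].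

(* rbar^j (j in N): rbar_k = -abar_kj (k in B), rbar_j = 1, rbar_k = 0 (k in N\{j});
   equivalently the unique r with A r = 0, r_j = 1, r_k = 0 for k in N \ {j}. *)
Definition rbar (j : 'I_n) : vec :=
  xget 0 [set r | [/\ A *m r = 0, r j 0 = 1 &
                   forall k, k \notin B -> k != j -> r k 0 = 0]].

(* P^B: drop the constraints x_i >= 0 for i in B *)
Definition PB : set vec :=
  [set x | A *m x = b /\ forall j, j \notin B -> 0 <= x j 0].

Variable (C : set vec).

Definition hit_set (j : 'I_n) : set R :=
  [set lam | 0 <= lam /\ C (xbar + lam *: rbar j)].

(* alpha_j = inf{..} (= +oo if empty), beta_j = sup{..} (= -oo if empty) *)
Definition alpha (j : 'I_n) : \bar R := ereal_inf (EFin @` hit_set j).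
Definition beta (j : 'I_n) : \bar R := ereal_sup (EFin @` hit_set j).

Definition N0 : set 'I_n :=
  [set j | j \notin B /\ alpha j = +oo%E /\ beta j = -oo%E].
Definition N1 : set 'I_n :=
  [set j | j \notin B /\ (0 < alpha j < +oo)%E /\ beta j = +oo%E].
Definition N2 : set 'I_n :=
  [set j | j \notin B /\ (0 < alpha j < +oo)%E /\ (alpha j < beta j < +oo)%E].
Definition N12 : set 'I_n := N1 `|` N2.

Definition TC : set vec :=
  msum [set xbar]
    (msum (conv_hull [set v | exists j lam, [/\ N12 j,
                (alpha j < lam%:E)%E, (lam%:E < beta j)%E & v = lam *: rbar j]])
          (recc C)).

Definition S0C : set vec :=
  msum [set xbar]
    (msum (conv_hull [set v | exists j lam, [/\ N12 j,
                (alpha j < lam%:E)%E & v = lam *: rbar j]])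
          (recc C)).

Definition SkC (k : 'I_n) : set vec :=
  msum [set xbar]
    (msum (conv_hull [set v | exists j lam, [/\ N2 j, 0 <= lam,
                (lam%:E < beta j)%E & v = lam *: rbar j]])
      (msum [set v | exists lam, lam <= 0 /\ v = lam *: rbar k]
          (recc C))).

End Defs.

(* Main.v *)
Require Import Defs.
From HB Require Import structures.
From mathcomp Require Import all_boot all_order all_algebra.
From mathcomp Require Import all_classical all_reals all_analysis.
From mathcomp Require Import ring lra.
Import Order.TTheory GRing.Theory Num.Theory.
Import numFieldNormedType.Exports.
Local Open Scope classical_set_scope.
Local Open Scope ring_scope.
Lemma two_affine (R : realType) (u0 u1 v0 v1 : R) :
  0 < u1 -> 0 < v0 -> 0 < u1 + v1 -> 0 <= u0 + v0 ->
  exists th, [/\ 0 <= th, th <= 1, 0 < th * u1 + (1 - th) * u0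
                 & 0 < th * v1 + (1 - th) * v0].
Proof.
move=> hu1 hv0 huv1 huv0.
have [hu0|hu0] := ltP 0 u0.
  by exists 0; rewrite !mul0r subr0 !mul1r !add0r; split.
have [hv1|hv1] := ltP 0 v1.
  by exists 1; rewrite !mul1r subrr !mul0r !addr0; split.
have D0 : 0 < (u1 - u0) + (v0 - v1) by lra.
have N0 : 0 < u1 * v0 - u0 * v1 by nra.
exists ((v0 - u0) / ((u1 - u0) + (v0 - v1))); split.
- by rewrite divr_ge0 // ?ltW //; lra.
- by rewrite ler_pdivrMr // mul1r; lra.
- have -> : (v0 - u0) / (u1 - u0 + (v0 - v1)) * u1 +
     (1 - (v0 - u0) / (u1 - u0 + (v0 - v1))) * u0 =
     (u1 * v0 - u0 * v1) / (u1 - u0 + (v0 - v1)).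
    by field; rewrite gt_eqF.
  exact: divr_gt0.
- have -> : (v0 - u0) / (u1 - u0 + (v0 - v1)) * v1 +
     (1 - (v0 - u0) / (u1 - u0 + (v0 - v1))) * v0 =
     (u1 * v0 - u0 * v1) / (u1 - u0 + (v0 - v1)).
    by field; rewrite gt_eqF.
  exact: divr_gt0.
Qed.
Section Gen.
Context {R : realType} {n : nat}.
Local Notation vec := 'cV[R]_n.

Lemma recc0 (S : set vec) : recc S 0.
Proof. by move=> x lam Sx _; rewrite scaler0 addr0. Qed.

Lemma reccD (S : set vec) u v : recc S u -> recc S v -> recc S (u + v).
Proof.
move=> Hu Hv x lam Sx l0; rewrite scalerDr addrA; exact: Hv (Hu _ _ Sx l0) l0.
Qed.

Lemma reccZ (S : set vec) a u : 0 <= a -> recc S u -> recc S (a *: u).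
Proof.
move=> a0 Hu x lam Sx l0; rewrite scalerA; apply: Hu => //; exact: mulr_ge0.
Qed.

Lemma recc_sum (S : set vec) k (w : 'I_k -> R) (v : 'I_k -> vec) :
  (forall i, 0 <= w i) -> (forall i, recc S (v i)) ->
  recc S (\sum_(i < k) w i *: v i).
Proof.
move=> w0 Hv; elim/big_ind: _ => //; [exact: recc0|exact: reccD|].
move=> i _; exact: reccZ.
Qed.

Lemma mxBE (u v : vec) i : (u - v) i 0 = u i 0 - v i 0.
Proof. by rewrite !mxE. Qed.

Definition lin (c : 'I_n -> R) (v : vec) := \sum_j c j * v j 0.

Lemma linD c u v : lin c (u + v) = lin c u + lin c v.
Proof. rewrite /lin -big_split; apply: eq_bigr => j _; by rewrite !mxE mulrDr. Qed.

Lemma linZ c a u : lin c (a *: u) = a * lin c u.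
Proof. rewrite /lin mulr_sumr; apply: eq_bigr => j _; rewrite !mxE; ring. Qed.

Lemma linN c u : lin c (- u) = - lin c u.
Proof. by rewrite -scaleN1r linZ mulN1r. Qed.

Lemma linB c u v : lin c (u - v) = lin c u - lin c v.
Proof. by rewrite linD linN. Qed.

Lemma lin_sum c k (v : 'I_k -> vec) : lin c (\sum_(i < k) v i) = \sum_(i < k) lin c (v i).
Proof.
rewrite /lin; under eq_bigr do rewrite summxE mulr_sumr.
by rewrite exchange_big.
Qed.

Lemma conv_lin_gt {S : set vec} {c c0 p} :
  (forall s, S s -> c0 < lin c s) -> conv_hull S p -> c0 < lin c p.
Proof.
move=> HS [k [P [w [SP w0 w1 ->]]]].
rewrite lin_sum; under eq_bigr do rewrite linZ.
have : exists i, 0 < w i.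
  apply/not_existsP => /= H.
  have : \sum_(i < k) w i <= 0.
    by apply: sumr_le0 => i _; rewrite leNgt; apply/negP; exact: H.
  by rewrite w1 ler10.
move=> [i wi].
rewrite -[c0]mulr1 -w1 mulr_sumr (bigD1 i) //= [X in _ < X](bigD1 i) //=.
apply: ltr_leD; first by rewrite mulrC ltr_pM2l //; exact: HS.
by apply: ler_sum => j _; rewrite mulrC ler_wpM2l //; apply/ltW/HS.
Qed.

Lemma conv_lin_lt {S : set vec} {c c0 p} :
  (forall s, S s -> lin c s < c0) -> conv_hull S p -> lin c p < c0.
Proof.
move=> HS Hp; rewrite -ltrN2.
have E : forall v, - lin c v = lin (fun j => - c j) v.
  by move=> v; rewrite /lin -sumrN; apply: eq_bigr => j _; ring.
rewrite E; apply: (@conv_lin_gt S _ _ p _ Hp) => s Ss; rewrite -E ltrN2; exact: HS.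
Qed.

Lemma conv_coord_ge0 {S : set vec} {j p} :
  (forall s, S s -> 0 <= s j 0) -> conv_hull S p -> 0 <= p j 0.
Proof.
move=> HS [k [P [w [SP w0 w1 ->]]]]; rewrite summxE.
by apply: sumr_ge0 => i _; rewrite mxE mulr_ge0 //; exact: HS.
Qed.

Lemma conv_coord_eq0 {S : set vec} {j p} :
  (forall s, S s -> s j 0 = 0) -> conv_hull S p -> p j 0 = 0.
Proof.
move=> HS [k [P [w [SP w0 w1 ->]]]]; rewrite summxE.
by apply: big1 => i _; rewrite mxE HS // mulr0.
Qed.

Lemma conv_mul0 {m} {A : 'M[R]_(m, n)} {S : set vec} {p} :
  (forall s, S s -> A *m s = 0) -> conv_hull S p -> A *m p = 0.
Proof.
move=> HS [k [P [w [SP w0 w1 ->]]]]; rewrite mulmx_sumr.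
by apply: big1 => i _; rewrite -scalemxAr HS // scaler0.
Qed.

End Gen.
Section Facts.
Context {R : realType} {m n : nat} {A : 'M[R]_(m, n)} {b : 'cV[R]_m}
  {B : {set 'I_n}} {C : set 'cV[R]_n}.
Local Notation vec := 'cV[R]_n.
Local Notation xb := (xbar A b B).
Local Notation rb := (rbar A B).
Local Notation K := (recc C).

Lemma PB_recc x0 d : PB A b B x0 -> recc (PB A b B) d ->
  A *m d = 0 /\ (forall j, j \notin B -> 0 <= d j 0).
Proof.
move=> Px0 Hd; split.
  have [H1 _] := Hd x0 1 Px0 ler01.
  move: Px0 => [H0 _]; move: H1; rewrite scale1r mulmxDr H0 => H1.
  by apply: (@addrI _ b); rewrite addr0.
move=> j jB; rewrite leNgt; apply/negP => dj.
have x0j : 0 <= x0 j 0 by move: Px0 => [_ ]; apply.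
have l0 : 0 <= (x0 j 0 + 1) / - d j 0 by rewrite divr_ge0 // ?addr_ge0 // oppr_ge0 ltW.
have [_ H2] := Hd x0 _ Px0 l0.
have := H2 j jB; rewrite !mxE.
have -> : (x0 j 0 + 1) / - d j 0 * d j 0 = - (x0 j 0 + 1).
  field; by rewrite lt_eqF.
rewrite opprD addrA addrN add0r => ?; lra.
Qed.

Lemma rbar_spec j lam : C (xb + lam *: rb j) -> ~ C xb ->
  [/\ A *m rb j = 0, rb j j 0 = 1 &
      forall k, k \notin B -> k != j -> rb j k 0 = 0].
Proof.
move=> Cl nC.
have [ex|nex] := pselect (exists r : vec, [/\ A *m r = 0, r j 0 = 1 &
                   forall k, k \notin B -> k != j -> r k 0 = 0]).
  exact: (xgetPex 0 ex).
exfalso; apply: nC; move: Cl; rewrite /rbar xgetPN ?scaler0 ?addr0 //.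
by move=> r Hr; apply: nex; exists r.
Qed.

Lemma convC (HC : convex_set (C : set (convex_lmodType vec))) (x y : vec) t :
  0 <= t -> t <= 1 -> C x -> C y -> C (t *: x + (1 - t) *: y).
Proof.
move=> t0 t1 Cx Cy.
have := HC x y (Itv01 t0 t1) (mem_set Cx) (mem_set Cy).
by move/set_mem.
Qed.

End Facts.
Section N1sec.
Context {R : realType} {m n : nat} {A : 'M[R]_(m, n)} {b : 'cV[R]_m}
  {B : {set 'I_n}} {C : set 'cV[R]_n}.
Local Notation vec := 'cV[R]_n.
Local Notation xb := (xbar A b B).
Local Notation rb := (rbar A B).
Local Notation K := (recc C).
Hypothesis HC : convex_set (C : set (convex_lmodType vec)).
Hypothesis HO : open C.

Lemma N1_line j t : N1 A b B C j -> (alpha A b B C j < t%:E)%E ->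
  C (xb + t *: rb j).
Proof.
move=> [_ [_ bj]] aj.
have [_ [h1 [h10 Ch1] <-] y_lt] := ereal_inf_lt aj.
have : (t%:E < beta A b B C j)%E by rewrite bj ltey.
move/ereal_sup_gt => [_ [h2 [h20 Ch2] <-] t_lt].
rewrite lte_fin in y_lt; rewrite lte_fin in t_lt.
have h12 : h2 - h1 != 0 by rewrite subr_eq0 gt_eqF // (lt_trans y_lt t_lt).
have -> : xb + t *: rb j = ((h2 - t) / (h2 - h1)) *: (xb + h1 *: rb j)
     + (1 - (h2 - t) / (h2 - h1)) *: (xb + h2 *: rb j).
  by apply/matrixP => i k; rewrite !mxE; field.
apply: (convC HC) => //.
  by rewrite divr_ge0 // subr_ge0 ltW // (lt_trans y_lt t_lt).
rewrite ler_pdivrMr ?mul1r ?subr_gt0 ?(lt_trans y_lt t_lt) //.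
by rewrite lerD2l lerN2 ltW.
Qed.

Lemma N1_recc j : N1 A b B C j -> K (rb j).
Proof.
move=> N1j y lam Cy l0.
have [->|lam0] := eqVneq lam 0; first by rewrite scale0r addr0.
have lp : 0 < lam by rewrite lt_neqAle eq_sym lam0.
move: (N1j) => [_ [/andP [a0 aoo] _]].
set a := fine (alpha A b B C j).
have aE : alpha A b B C j = a%:E.
  by rewrite /a fineK // ge0_fin_numE // ltW.
have apos : 0 < a by rewrite -lte_fin -aE.
have : nbhs y C by apply: open_nbhs_nbhs; split.
move=> Hn; have := proj1 (nbhs_normP y C) Hn; case=> e /= e0 He.
set M := `|y - xb|.
have M0 : 0 <= M by apply: normr_ge0.
set D := 2 + a / lam + 2 * M / e.
have D2 : 2 <= D.
  by rewrite /D -addrA lerDl addr_ge0 // divr_ge0 // ?mulr_ge0 // ltW.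
have D0 : 0 < D by apply: lt_le_trans D2.
set s := D^-1.
have s0 : 0 < s by rewrite invr_gt0.
have s1 : 1 - s != 0.
  rewrite subr_eq0 eq_sym; apply/negP => /eqP sE.
  move: D2; rewrite -[D]invrK -/s sE invr1 => ?; lra.
set w := (1 - s)^-1 *: (y - s *: xb).
have -> : y + lam *: rb j = s *: (xb + (lam / s) *: rb j) + (1 - s) *: w.
  apply/matrixP => i k; rewrite !mxE; field.
  by rewrite s1 gt_eqF.
apply: (convC HC).
- exact: ltW.
- by rewrite /s invf_le1 // (le_trans _ D2) // ler1n.
- apply: N1_line => //; rewrite aE lte_fin /s invrK.
  rewrite /D -ltr_pdivrMl // mulrC.
  have h : 0 <= 2 * M / e by rewrite divr_ge0 ?mulr_ge0 // ltW.
  move: h; set u := a / lam; set v := 2 * M / e => h; lra.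
- apply: He => /=.
  have D1 : 1 < D by apply: lt_le_trans D2; lra.
  have -> : y - w = (- (D - 1)^-1) *: (y - xb).
    apply/matrixP => i k; rewrite /w /s !mxE; field.
    by rewrite subr_eq0 !gt_eqF.
  rewrite mx_normZ normrN ger0_norm; last by rewrite invr_ge0 subr_ge0 ltW.
  rewrite mulrC -/M ltr_pdivrMr ?subr_gt0 //.
  have -> : e * (D - 1) = (1 + a / lam) * e + 2 * M.
    by rewrite /D; field; rewrite lam0 gt_eqF.
  have h : 0 < (1 + a / lam) * e by rewrite mulr_gt0 // addr_gt0 // divr_gt0.
  move: h; set u := (1 + a / lam) * e => h; lra.
Qed.

End N1sec.
Section Main.
Variables (R : realType) (m n : nat) (A : 'M[R]_(m, n)) (b : 'cV[R]_m)
  (B : {set 'I_n}) (C : set 'cV[R]_n).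
Local Notation vec := 'cV[R]_n.
Local Notation xb := (xbar A b B).
Local Notation rb := (rbar A B).
Local Notation K := (recc C).
Local Notation al := (alpha A b B C).
Local Notation be := (beta A b B C).
Local Notation N1' := (N1 A b B C).
Local Notation N2' := (N2 A b B C).
Local Notation N12' := (N12 A b B C).

Hypothesis Hxb : ~ C xb.
Hypothesis HN1 : forall j, N1' j -> K (rb j).
Hypothesis HKP : forall d, K d -> A *m d = 0 /\ (forall j, j \notin B -> 0 <= d j 0).
Hypothesis HBasis : forall x : vec, (forall j, j \notin B -> x j 0 = 0) ->
  A *m x = 0 -> x = 0.

Definition a_ j := fine (al j).
Definition b_ j := fine (be j).
Definition ia j := if `[< N12' j >] then (a_ j)^-1 else 0.
Definition ib j := if `[< N2' j >] then (b_ j)^-1 else 0.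

Lemma N2_N12 {j} : N2' j -> N12' j.
Proof. by right. Qed.

Lemma N12_notB {j} : N12' j -> j \notin B.
Proof. by case=> [[]|[]]. Qed.

Lemma N1_notN2 {j} : N1' j -> ~ N2' j.
Proof.
move=> [_ [_ bj]] [_ [_ /andP [_ bj']]]; by move: bj'; rewrite bj ltxx.
Qed.

Lemma N12_N1 {j} : N12' j -> ~ N2' j -> N1' j.
Proof. by case. Qed.

Lemma aE {j} : N12' j -> al j = (a_ j)%:E /\ 0 < a_ j.
Proof.
have H : (0 < al j < +oo)%E -> al j = (a_ j)%:E /\ 0 < a_ j.
  move=> /andP [a0 aoo].
  have E : al j = (a_ j)%:E by rewrite /a_ fineK // ge0_fin_numE // ltW.
  by split => //; rewrite -lte_fin -E.
by case=> [[_ [Ha _]]|[_ [Ha _]]]; apply: H.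
Qed.

Lemma bE {j} : N2' j -> be j = (b_ j)%:E /\ a_ j < b_ j.
Proof.
move=> N2j; have [aj a0] := aE (N2_N12 N2j).
move: N2j => [_ [_ /andP [ab boo]]].
have b0 : (0 <= be j)%E.
  by apply: le_trans (ltW ab); rewrite aj lee_fin ltW.
have E : be j = (b_ j)%:E by rewrite /b_ fineK // ge0_fin_numE.
by split => //; rewrite -lte_fin -E -aj.
Qed.

Lemma ia_N12 j : N12' j -> ia j = (a_ j)^-1.
Proof. by move=> H; rewrite /ia asboolT. Qed.
Lemma ia_nN12 j : ~ N12' j -> ia j = 0.
Proof. by move=> H; rewrite /ia asboolF. Qed.
Lemma ib_N2 j : N2' j -> ib j = (b_ j)^-1.
Proof. by move=> H; rewrite /ib asboolT. Qed.
Lemma ib_nN2 j : ~ N2' j -> ib j = 0.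
Proof. by move=> H; rewrite /ib asboolF. Qed.
Lemma ib_nN12 j : ~ N12' j -> ib j = 0.
Proof. by move=> H; apply: ib_nN2 => /N2_N12. Qed.

Lemma ia_ge0 j : 0 <= ia j.
Proof.
have [H|H] := pselect (N12' j); last by rewrite ia_nN12.
by rewrite ia_N12 // invr_ge0 ltW //; case: (aE H).
Qed.

Lemma ib_ge0 j : 0 <= ib j.
Proof.
have [H|H] := pselect (N2' j); last by rewrite ib_nN2.
have [_ a0] := aE (N2_N12 H); have [_ ab] := bE H.
by rewrite ib_N2 // invr_ge0 ltW // (lt_trans a0).
Qed.

Lemma ib_lt_ia {j} : N12' j -> ib j < ia j.
Proof.
move=> H; have [_ a0] := aE H; rewrite ia_N12 //.
have [H2|H2] := pselect (N2' j); last by rewrite ib_nN2 // invr_gt0.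
have [_ ab] := bE H2; rewrite ib_N2 // ltf_pV2 ?posrE //.
exact: lt_trans ab.
Qed.

Lemma ia_B j : j \in B -> ia j = 0.
Proof. by move=> jB; apply: ia_nN12 => /N12_notB; rewrite jB. Qed.
Lemma ib_B j : j \in B -> ib j = 0.
Proof. by move=> jB; apply: ib_nN12 => /N12_notB; rewrite jB. Qed.

Lemma hit_N12 {j} : N12' j -> exists lam, C (xb + lam *: rb j).
Proof.
move=> H; have [aj _] := aE H.
have : (al j < +oo)%E by rewrite aj ltey.
by move/ereal_inf_lt => [_ [l [_ Cl] _] _]; exists l.
Qed.

Lemma rbS {j} : N12' j -> [/\ A *m rb j = 0, rb j j 0 = 1 &
      forall k, k \notin B -> k != j -> rb j k 0 = 0].
Proof. by move=> /hit_N12 [l Cl]; apply: rbar_spec Cl Hxb. Qed.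

Lemma rb_coord j k : N12' j -> k \notin B -> rb j k 0 = (k == j)%:R.
Proof.
move=> H kB; have [_ r1 r0] := rbS H.
by have [->|kj] := eqVneq k j; [rewrite r1|rewrite r0].
Qed.

Lemma lin_rb c j : (forall k, k \in B -> c k = 0) -> N12' j -> lin c (rb j) = c j.
Proof.
move=> cB H; rewrite /lin (bigD1 j) //= rb_coord ?eqxx ?mulr1 ?N12_notB //.
rewrite big1 ?addr0 // => k kj.
have [kB|kB] := boolP (k \in B); first by rewrite cB ?mul0r.
by rewrite rb_coord // (negbTE kj) mulr0.
Qed.

Lemma linc_comb (x y : R) (c1 c2 : 'I_n -> R) (v : vec) :
  lin (fun j => x * c1 j + y * c2 j) v = x * lin c1 v + y * lin c2 v.
Proof.
rewrite /lin !mulr_sumr -big_split; apply: eq_bigr => j _ /=; ring.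
Qed.

Lemma decomp q : A *m q = 0 -> (forall j, j \notin B -> ~ N12' j -> q j 0 = 0) ->
  q = \sum_j (if `[< N12' j >] then q j 0 *: rb j else 0).
Proof.
move=> Aq qN; apply/eqP; rewrite -subr_eq0; apply/eqP; apply: HBasis.
  move=> k kB; rewrite !mxE summxE.
  have [H|H] := pselect (N12' k).
    rewrite (bigD1 k) //= asboolT // mxE rb_coord // eqxx mulr1.
    rewrite big1 ?addr0 ?subrr // => j jk.
    have [Hj|Hj] := pselect (N12' j); last by rewrite asboolF // mxE.
    by rewrite asboolT // mxE rb_coord // eq_sym (negbTE jk) mulr0.
  rewrite qN // big1 ?subr0 // => j _.
  have [Hj|Hj] := pselect (N12' j); last by rewrite asboolF // mxE.
  rewrite asboolT // mxE rb_coord //.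
  by have [kj|] := eqVneq k j; [rewrite kj in H|rewrite mulr0].
rewrite mulmxBr Aq mulmx_sumr sub0r big1 ?oppr0 // => j _.
have [Hj|Hj] := pselect (N12' j); last by rewrite asboolF // mulmx0.
by rewrite asboolT // -scalemxAr; case: (rbS Hj) => -> _ _; rewrite scaler0.
Qed.


Lemma inT q e : K e -> A *m q = 0 -> (forall j, j \notin B -> 0 <= q j 0) ->
  (forall j, j \notin B -> ~ N12' j -> q j 0 = 0) ->
  1 < lin ia q -> lin ib q < 1 -> TC A b B C (xb + (q + e)).
Proof.
move=> Ke Aq q0 qN F1 G1.
exists xb, (q + e); split => //; exists q, e; split => //.
have [j0 Hj0] : exists j0, N12' j0.
  have [//|H] := pselect (exists j0, N12' j0).
  move: F1; rewrite /lin big1 ?ltr10 // => j _.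
  by rewrite ia_nN12 ?mul0r // => Hj; apply: H; exists j.
set F := lin ia q; set G := lin ib q.
have FG : 0 < F - G by rewrite subr_gt0; exact: lt_trans G1 F1.
set t := (F - 1) / (F - G).
have t0 : 0 < t by rewrite divr_gt0 // subr_gt0.
have t1 : t < 1 by rewrite ltr_pdivrMr // mul1r ltrD2l ltrN2.
set il := fun j => (1 - t) * ia j + t * ib j.
have il_pos : forall j, N12' j -> 0 < il j.
  move=> j H.
  have h1 : 0 < (1 - t) * ia j.
    by rewrite mulr_gt0 ?subr_gt0 // (le_lt_trans (ib_ge0 j)) // ib_lt_ia.
  have h2 : 0 <= t * ib j by rewrite mulr_ge0 ?ib_ge0 // ltW.
  by rewrite /il; apply: (lt_le_trans h1); rewrite lerDl.
have il_n : forall j, ~ N12' j -> il j = 0.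
  by move=> j H; rewrite /il ia_nN12 // ib_nN12 // !mulr0 addr0.
have il_lt : forall j, N12' j -> il j < ia j.
  move=> j H; have := ib_lt_ia H; rewrite /il => h.
  have : t * ib j < t * ia j by rewrite ltr_pM2l.
  move: h; set u := ia j; set v := ib j => h h'.
  have -> : (1 - t) * u + t * v = u - (t * u - t * v) by ring.
  by rewrite ltrBlDr ltrDl subr_gt0.
have il_gt : forall j, N2' j -> ib j < il j.
  move=> j H; have := ib_lt_ia (N2_N12 H); rewrite /il => h.
  have : (1 - t) * ib j < (1 - t) * ia j by rewrite ltr_pM2l // subr_gt0.
  move: h; set u := ia j; set v := ib j => h h'.
  have -> : (1 - t) * u + t * v = v + ((1 - t) * u - (1 - t) * v) by ring.
  by rewrite ltrDl subr_gt0.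
have gen : forall j, N12' j -> [set v | exists j lam, [/\ N12' j,
                (al j < lam%:E)%E, (lam%:E < be j)%E & v = lam *: rb j]]
                ((il j)^-1 *: rb j).
  move=> j H; exists j, (il j)^-1; split => //.
    have [-> a0] := aE H; rewrite lte_fin -[a_ j]invrK ltf_pV2 ?posrE ?invr_gt0 ?il_pos //.
    by rewrite -ia_N12 // il_lt.
  have [H2|H2] := pselect (N2' j).
    have [-> ab] := bE H2; rewrite lte_fin -[b_ j]invrK ltf_pV2 ?posrE ?invr_gt0 ?il_pos //.
      by rewrite -ib_N2 // il_gt.
    by have [_ a0] := aE H; apply: lt_trans ab.
  by have [_ [_ ->]] := N12_N1 H H2; rewrite ltey.
exists n, (fun j => if `[< N12' j >] then (il j)^-1 *: rb j else (il j0)^-1 *: rb j0),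
  (fun j => il j * q j 0); split.
- move=> j; have [H|H] := pselect (N12' j); first by rewrite asboolT //; apply: gen.
  by rewrite asboolF //; apply: gen.
- move=> j; have [H|H] := pselect (N12' j); last by rewrite il_n // mul0r.
  by apply: mulr_ge0; [exact: ltW (il_pos _ H) | apply: q0; exact: N12_notB H].
- have -> : \sum_(i < n) il i * q i 0 = lin il q by [].
  rewrite /il linc_comb -/F -/G /t; field.
  by rewrite gt_eqF.
- rewrite {1}(decomp q Aq qN); apply: eq_bigr => j _.
  have [H|H] := pselect (N12' j); last by rewrite !asboolF // il_n // mul0r scale0r.
  rewrite !asboolT // scalerA; congr (_ *: _); field.
  by rewrite gt_eqF // il_pos.
Qed.
Lemma fg_ge0 (q : vec) : (forall j, j \notin B -> 0 <= q j 0) -> 0 <= lin ia q - lin ib q.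
Proof.
move=> q0; rewrite /lin -sumrB; apply: sumr_ge0 => j _; rewrite -mulrBl.
have [H|H] := pselect (N12' j); last by rewrite ia_nN12 // ib_nN12 // subrr mul0r.
by apply: mulr_ge0; [rewrite subr_ge0 ltW // ib_lt_ia | apply: q0; exact: N12_notB H].
Qed.

Lemma fg_gt0 (q : vec) : (forall j, j \notin B -> 0 <= q j 0) -> 1 < lin ia q ->
  0 < lin ia q - lin ib q.
Proof.
move=> q0 F1.
have [j hj] : exists j, 0 < ia j * q j 0.
  have [//|H] := pselect (exists j, 0 < ia j * q j 0).
  have : lin ia q <= 0.
    apply: sumr_le0 => j _; rewrite leNgt; apply/negP => h; apply: H; by exists j.
  move=> h; have := lt_le_trans F1 h; by rewrite ltr10.
have Hj : N12' j.
  have [//|H] := pselect (N12' j); by move: hj; rewrite ia_nN12 // mul0r ltxx.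
have ia0 : 0 < ia j by rewrite ia_N12 // invr_gt0; case: (aE Hj).
have qj : 0 < q j 0 by rewrite -(pmulr_rgt0 _ ia0).
rewrite /lin -sumrB (bigD1 j) //= -mulrBl.
apply: (lt_le_trans (y := (ia j - ib j) * q j 0)).
  by rewrite mulr_gt0 // subr_gt0 ib_lt_ia.
rewrite lerDl; apply: sumr_ge0 => i _; rewrite -mulrBl.
have [H|H] := pselect (N12' i); last by rewrite ia_nN12 // ib_nN12 // subrr mul0r.
by apply: mulr_ge0; [rewrite subr_ge0 ltW // ib_lt_ia | apply: q0; exact: N12_notB H].
Qed.

Definition Eset (mu e : vec) := [/\ K e, forall j, j \notin B -> e j 0 <= mu j 0
  & forall j, j \notin B -> ~ N12' j -> e j 0 = mu j 0].

Lemma conv_vec (mu e1 e2 : vec) th :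
  mu - (th *: e1 + (1 - th) *: e2) = th *: (mu - e1) + (1 - th) *: (mu - e2).
Proof. apply/matrixP => i k; rewrite !mxE; ring. Qed.

Lemma g_comb c (mu e1 e2 : vec) th :
  lin c (mu - (th *: e1 + (1 - th) *: e2)) =
  th * lin c (mu - e1) + (1 - th) * lin c (mu - e2).
Proof. by rewrite conv_vec [LHS]linD !linZ. Qed.

Lemma Eset_conv (mu e1 e2 : vec) th : 0 <= th -> th <= 1 -> Eset mu e1 -> Eset mu e2 ->
  Eset mu (th *: e1 + (1 - th) *: e2).
Proof.
move=> t0 t1 [K1 L1 Q1] [K2 L2 Q2]; split.
- by apply: reccD; apply: reccZ => //; rewrite subr_ge0.
- move=> j jB; rewrite !mxE.
  have := L1 j jB; have := L2 j jB; nra.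
- by move=> j jB H; rewrite !mxE Q1 // Q2 //; ring.
Qed.

Lemma stepA (mu e0 : vec) : Eset mu e0 -> (forall j, j \notin B -> 0 <= mu j 0) ->
  (forall k, N2' k -> exists ek pk tk, [/\ K ek, 0 <= tk, mu = pk - tk *: rb k + ek,
      (forall j, j \notin B -> 0 <= pk j 0 /\ (~ N2' j -> pk j 0 = 0))
      & lin ib pk < 1]) ->
  exists e, Eset mu e /\ lin ib (mu - e) < 1.
Proof.
move=> E0 mu0 HS.
have [//|H] := pselect (exists e, Eset mu e /\ lin ib (mu - e) < 1).
exfalso.
have Hge : forall e, Eset mu e -> 1 <= lin ib (mu - e).
  move=> e Ee; rewrite leNgt; apply/negP => h; apply: H; by exists e.
pose P := fun (k : 'I_n) (y : vec * vec * R) =>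
   N2' k -> [/\ K y.1.1, 0 <= y.2, mu = y.1.2 - y.2 *: rb k + y.1.1,
      (forall j, j \notin B -> 0 <= y.1.2 j 0 /\ (~ N2' j -> y.1.2 j 0 = 0))
      & lin ib y.1.2 < 1].
have Hex : forall k, exists y, P k y.
  move=> k; have [H2|H2] := pselect (N2' k); last by exists (0, 0, 0).
  by have [ek [pk [tk Hk]]] := HS k H2; exists (ek, pk, tk).
have [f Hf] := choice Hex.
set ek := fun k => (f k).1.1; set pk := fun k => (f k).1.2; set tk := fun k => (f k).2.
have coord : forall k j, N2' k -> j \notin B ->
    mu j 0 - ek k j 0 = pk k j 0 - tk k * (j == k)%:R.
  move=> k j H2 jB; have [_ _ Hmu _ _] := Hf k H2.
  rewrite {1}Hmu !mxE (rb_coord _ _ (N2_N12 H2) jB) /ek /pk /tk; ring.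
have gek : forall k, N2' k -> lin ib (mu - ek k) <= lin ib (pk k).
  move=> k H2; have [_ t0 Hmu _ _] := Hf k H2.
  have -> : mu - ek k = pk k - tk k *: rb k by rewrite {1}Hmu addrK.
  rewrite linB linZ (lin_rb ib k _ (N2_N12 H2)); last by move=> j jB; rewrite ib_B.
  by rewrite gerBl mulr_ge0 // ib_ge0.
have Ekb : forall k, N2' k -> (forall j, j \notin B -> j != k -> ek k j 0 <= mu j 0)
    /\ (forall j, j \notin B -> ~ N12' j -> ek k j 0 = mu j 0).
  move=> k H2; have [_ _ _ pp _] := Hf k H2; split.
    move=> j jB jk; have := coord k j H2 jB; rewrite (negbTE jk) mulr0 subr0.
    by move=> h; rewrite -subr_ge0 h; case: (pp j jB).
  move=> j jB HN; have jk : j != k by apply/eqP => E; apply: HN; rewrite E; apply: N2_N12.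
  have := coord k j H2 jB; rewrite (negbTE jk) mulr0 subr0 (proj2 (pp j jB)); last by move/N2_N12.
  by move/eqP; rewrite subr_eq0 => /eqP.
have claim1 : forall k, N2' k -> mu k 0 < ek k k 0.
  move=> k H2; rewrite ltNge; apply/negP => hk.
  have [K1 _ _ _ c1] := Hf k H2.
  have Ee : Eset mu (ek k).
    split => //; last by case: (Ekb k H2).
    move=> j jB; have [->|jk] := eqVneq j k; first exact: hk.
    by case: (Ekb k H2) => h _; apply: h.
  have := le_trans (Hge _ Ee) (gek k H2); move=> h.
  by have := le_lt_trans h c1; rewrite ltxx.

have bpos : forall k, N2' k -> 0 < b_ k.
  move=> k H2; have [_ a0] := aE (N2_N12 H2); have [_ ab] := bE H2.
  exact: lt_trans ab.
have Ekk0 : forall k, N2' k -> 0 < ek k k 0.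
  move=> k H2; apply: le_lt_trans (claim1 k H2).
  by apply: mu0; apply: N12_notB; apply: N2_N12.
pose gk := fun k => if `[< N2' k >] then
   b_ k * (1 - lin ib (pk k)) / ((n.+1)%:R * ek k k 0) else 1.
have gk_pos : forall k, 0 < gk k.
  move=> k; rewrite /gk; have [H2|H2] := pselect (N2' k); last by rewrite asboolF.
  rewrite asboolT //; have [_ _ _ _ c1] := Hf k H2.
  rewrite divr_gt0 ?mulr_gt0 ?bpos ?Ekk0 //; by rewrite subr_gt0.
pose gam := (1 + \sum_k (gk k)^-1)^-1.
have Sge0 : 0 <= \sum_k (gk k)^-1.
  by apply: sumr_ge0 => k _; rewrite invr_ge0 ltW.
have gam0 : 0 < gam by rewrite invr_gt0 ltr_pwDl.
have gam_le : forall k, gam <= gk k.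
  move=> k; rewrite /gam -[gk k]invrK lef_pV2 ?posrE ?invr_gt0 ?ltr_pwDl //.
  apply: (le_trans (y := \sum_k (gk k)^-1)); last by rewrite lerDr.
  rewrite (bigD1 k) //= lerDl.
  by apply: sumr_ge0 => i _; rewrite invr_ge0 ltW.
have improve : forall e, Eset mu e -> exists e', Eset mu e' /\
    lin ib (mu - e') <= lin ib (mu - e) - gam.
  move=> e Ee; have g1 := Hge e Ee.
  have [k [H2 hk]] : exists k, N2' k /\ ((n.+1)%:R)^-1 <= ib k * (mu k 0 - e k 0).
    have [//|H'] := pselect (exists k, N2' k /\ ((n.+1)%:R)^-1 <= ib k * (mu k 0 - e k 0)).
    exfalso.
    have : lin ib (mu - e) <= \sum_(j < n) ((n.+1)%:R)^-1.
      apply: ler_sum => j _; rewrite !mxE.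
      have [H2|H2] := pselect (N2' j); last by rewrite ib_nN2 // mul0r invr_ge0.
      rewrite leNgt; apply/negP => h; apply: H'; exists j; split => //.
      by apply: ltW.
    rewrite sumr_const card_ord => h.
    have E : ((n.+1)%:R)^-1 *+ n = n%:R / (n.+1)%:R :> R by rewrite mulr_natl.
    rewrite E in h.
    have : n%:R * ((n.+1)%:R)^-1 < 1 :> R.
      by rewrite ltr_pdivrMr ?ltr0n // mul1r ltr_nat.
    move=> h'; have := le_lt_trans g1 (le_lt_trans h h'); by rewrite ltxx.
  have [Ke eL eN] := Ee.
  have ek0 : 0 <= e k 0 by case: (HKP _ Ke) => _; apply; apply: N12_notB; apply: N2_N12.
  have [K1 t0 _ _ c1] := Hf k H2.
  have cl := claim1 k H2.
  set d := mu k 0 - e k 0.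
  have hd : b_ k / (n.+1)%:R <= d.
    move: hk; rewrite ib_N2 // => hk.
    have := ler_wpM2l (ltW (bpos k H2)) hk.
    by rewrite mulrA mulfV ?gt_eqF ?bpos // mul1r mulrC.
  have d0 : 0 < d by apply: lt_le_trans hd; rewrite divr_gt0 ?bpos ?ltr0n.
  set Ekk := ek k k 0.
  have Ed : 0 < Ekk - e k 0 by rewrite subr_gt0 (le_lt_trans _ cl) // -subr_ge0 ltW.
  set th := (Ekk - mu k 0) / (Ekk - e k 0).
  have th0 : 0 <= th by apply: divr_ge0; [rewrite subr_ge0; exact: ltW cl | exact: ltW Ed].
  have th1 : th <= 1.
    by rewrite ler_pdivrMr // mul1r lerD2l lerN2 -subr_ge0 ltW.
  have X : 1 - th = d / (Ekk - e k 0) by rewrite /th /d; field; rewrite gt_eqF.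
  exists (th *: e + (1 - th) *: ek k); split.
    split.
    - by apply: reccD; apply: reccZ => //; rewrite subr_ge0.
    - move=> j jB; rewrite !mxE.
      have [->|jk] := eqVneq j k.
        have -> : th * e k 0 + (1 - th) * ek k k 0 = mu k 0.
          by rewrite /th -/Ekk; field; rewrite gt_eqF.
        by [].
      have := eL j jB; have := (proj1 (Ekb k H2)) j jB jk; nra.
    - move=> j jB HN; rewrite !mxE eN // (proj2 (Ekb k H2)) //; ring.
  rewrite g_comb.
  have gle := gek k H2.
  have key : gam <= (1 - th) * (lin ib (mu - e) - lin ib (mu - ek k)).
    apply: le_trans (gam_le k) _; rewrite /gk asboolT //.
    have h1 : b_ k / ((n.+1)%:R * Ekk) <= 1 - th.
      rewrite X invfM mulrA.
      apply: (le_trans (y := d / Ekk)).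
        by rewrite ler_pM2r ?invr_gt0 ?Ekk0.
      rewrite ler_pM2l // lef_pV2 ?posrE ?Ekk0 //.
      by rewrite gerBl.
    have h2 : 1 - lin ib (pk k) <= lin ib (mu - e) - lin ib (mu - ek k).
      by apply: lerB.
    rewrite mulrAC.
    apply: (le_trans (y := (1 - th) * (1 - lin ib (pk k)))).
      by rewrite ler_pM2r // subr_gt0.
    by rewrite ler_wpM2l // subr_ge0.
  move: key; set G := lin ib (mu - e); set G' := lin ib (mu - ek k) => key.
  have -> : th * G + (1 - th) * G' = G - (1 - th) * (G - G') by ring.
  by rewrite lerD2l lerN2.
have iter : forall N : nat, exists e, Eset mu e /\
    lin ib (mu - e) <= lin ib (mu - e0) - N%:R * gam.
  elim => [|N [e [Ee He]]]; first by exists e0; rewrite mul0r subr0.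
  have [e' [Ee' He']] := improve e Ee.
  exists e'; split => //; apply: le_trans He' _.
  rewrite -natr1 mulrDl mul1r opprD addrA lerD2r //.
have g0 := Hge e0 E0.
have [N HN] : exists N : nat, lin ib (mu - e0) / gam < N%:R.
  exists (Num.Def.archi_bound (lin ib (mu - e0) / gam)); apply: archi_boundP.
  by apply: divr_ge0; [exact: le_trans ler01 g0 | exact: ltW gam0].
have [e [Ee He]] := iter N.
have := Hge e Ee; move: HN; rewrite ltr_pdivrMr // => HN h.
have : lin ib (mu - e0) - N%:R * gam < 0 by rewrite subr_lt0.
move=> h'; have := le_trans h He; move=> h''.
have := lt_le_trans (lt_trans h' ltr01) h''; by rewrite ltxx.
Qed.
Lemma gen_pos {j lam} : N12' j -> (al j < lam%:E)%E -> 0 < lam.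
Proof.
by move=> H; have [-> a0] := aE H; rewrite lte_fin; apply: lt_trans.
Qed.

Lemma T_S0 x : TC A b B C x -> S0C A b B C x.
Proof.
move=> [x1 [y1 [X1 [p [d [Hp Kd ->]]] ->]]]; exists x1, (p + d); split => //.
exists p, d; split => //.
move: Hp => [k [P [w [HP w0 w1 ->]]]]; exists k, P, w; split => // i.
by have [j [lam [N lt _ ->]]] := HP i; exists j, lam; split.
Qed.

Lemma T_Sk k x : N2' k -> TC A b B C x -> SkC A b B C k x.
Proof.
move=> N2k [x1 [y1 [X1 [p [d [[kk [P [w [HP w0 w1 Ep]]]] Kd ->]]] ->]]].
have Hex : forall i, exists jl : 'I_n * R, [/\ N12' jl.1, (al jl.1 < jl.2%:E)%E,
    (jl.2%:E < be jl.1)%E & P i = jl.2 *: rb jl.1].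
  by move=> i; have [j [lam H]] := HP i; exists (j, lam).
have [f Hf] := choice Hex.
pose P' := fun i => if `[< N2' (f i).1 >] then P i else 0.
pose ext := \sum_i w i *: (if `[< N2' (f i).1 >] then 0 else P i).
have Ep' : p = \sum_i w i *: P' i + ext.
  rewrite Ep -big_split; apply: eq_bigr => i _ /=; rewrite /P'.
  have [H|H] := pselect (N2' (f i).1).
    by rewrite !asboolT // scaler0 addr0.
  by rewrite !asboolF // scaler0 add0r.
have Kext : K ext.
  apply: recc_sum => // i.
  have [H|H] := pselect (N2' (f i).1); first by rewrite asboolT //; apply: recc0.
  rewrite asboolF //; have [N12i lt _ ->] := Hf i.
  apply: reccZ; first exact: ltW (gen_pos N12i lt).
  by apply: HN1; apply: N12_N1.
exists x1, (p + d); split => //.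
exists (\sum_i w i *: P' i), (0 *: rb k + (ext + d)); split.
- exists kk, P', w; split => // i; rewrite /P'.
  have [H|H] := pselect (N2' (f i).1).
    rewrite asboolT //; have [N12i lt lt2 ->] := Hf i.
    by exists (f i).1, (f i).2; split => //; exact: ltW (gen_pos N12i lt).
  rewrite asboolF //; exists k, 0; split => //; last by rewrite scale0r.
  have [-> ab] := bE N2k; have [_ a0] := aE (N2_N12 N2k).
  by rewrite lte_fin (lt_trans a0).
- exists (0 *: rb k), (ext + d); split; [by exists 0; split | exact: reccD Kext Kd | by []].
- by rewrite Ep' scale0r add0r addrA.
Qed.

Lemma main_incl x : S0C A b B C x -> (forall k, N2' k -> SkC A b B C k x) ->
  TC A b B C x.
Proof.
move=> [_ [_ [-> [p0 [e0 [Hp0 Ke0 ->]]] ->]]] HS.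
set mu := p0 + e0.
have Ap0 : A *m p0 = 0.
  apply: (conv_mul0 _ Hp0) => s [j [lam [H _ ->]]].
  by rewrite -scalemxAr; case: (rbS H) => -> _ _; rewrite scaler0.
have p0ge : forall i, i \notin B -> 0 <= p0 i 0.
  move=> i iB; apply: (conv_coord_ge0 _ Hp0) => s [j [lam [H lt ->]]].
  by rewrite mxE rb_coord // mulr_ge0 // ltW // (gen_pos H lt).
have p0N : forall i, i \notin B -> ~ N12' i -> p0 i 0 = 0.
  move=> i iB Hi; apply: (conv_coord_eq0 _ Hp0) => s [j [lam [H lt ->]]].
  rewrite mxE rb_coord //; have [ij|ij] := eqVneq i j; last by rewrite mulr0.
  by rewrite ij in Hi.
have p0F : 1 < lin ia p0.
  apply: (conv_lin_gt _ Hp0) => s [j [lam [H lt ->]]].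
  rewrite linZ lin_rb //; last by move=> i iB; rewrite ia_B.
  have [aj a0] := aE H; move: lt; rewrite aj lte_fin => lt.
  by rewrite ia_N12 // ltr_pdivlMr // mul1r.
have e0ge : forall i, i \notin B -> 0 <= e0 i 0 by case: (HKP _ Ke0).
have Ae0 : A *m e0 = 0 by case: (HKP _ Ke0).
have E0 : Eset mu e0.
  split => // i iB; rewrite /mu mxE ?lerDr ?p0ge //.
  by move=> Hi; rewrite p0N // add0r.
have mu0 : forall i, i \notin B -> 0 <= mu i 0.
  by move=> i iB; rewrite /mu mxE addr_ge0 ?p0ge ?e0ge.
have HS' : forall k, N2' k -> exists ek pk tk, [/\ K ek, 0 <= tk,
      mu = pk - tk *: rb k + ek,
      (forall j, j \notin B -> 0 <= pk j 0 /\ (~ N2' j -> pk j 0 = 0))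
      & lin ib pk < 1].
  move=> k N2k.
  have [x1 [y1 [X1 [pk [z [Hpk [lv [ek [[lam [l0 El]] Kek Ez]] Ey]]]] E]]] := HS k N2k.
  rewrite X1 Ey Ez El in E; clear El.
  exists ek, pk, (- lam); split => //.
  - by rewrite oppr_ge0.
  - by rewrite scaleNr opprK -addrA; apply: (addrI xb).
  - move=> j jB; split.
      apply: (conv_coord_ge0 _ Hpk) => s [i [l [H l0' _ ->]]].
      by rewrite mxE (rb_coord _ _ (N2_N12 H) jB); apply: mulr_ge0.
    move=> Hj; apply: (conv_coord_eq0 _ Hpk) => s [i [l [H _ _ ->]]].
    rewrite mxE (rb_coord _ _ (N2_N12 H) jB); have [ji|ji] := eqVneq j i; last by rewrite mulr0.
    by rewrite ji in Hj.
  - apply: (conv_lin_lt _ Hpk) => s [i [l [H l0' lt ->]]].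
    rewrite linZ (lin_rb ib i _ (N2_N12 H)); last by move=> j jB; rewrite ib_B.
    have [bi ab] := bE H; have [_ a0] := aE (N2_N12 H).
    move: lt; rewrite bi lte_fin => lt.
    rewrite ib_N2 // ltr_pdivrMr ?mul1r //; exact: lt_trans ab.
have [e' [E' G']] := stepA _ _ E0 mu0 HS'.
have mue0 : mu - e0 = p0 by rewrite /mu addrK.
have c1 : 0 < lin ia (mu - e0) - 1 by rewrite mue0 subr_gt0.
have c2 : 0 < 1 - lin ib (mu - e') by rewrite subr_gt0.
have c3 : 0 < (lin ia (mu - e0) - 1) + (1 - lin ib (mu - e0)).
  rewrite addrA subrK mue0; exact: fg_gt0.
have c4 : 0 <= (lin ia (mu - e') - 1) + (1 - lin ib (mu - e')).
  rewrite addrA subrK; apply: fg_ge0 => j jB; rewrite !mxE subr_ge0.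
  by case: E' => _ h _; have := h j jB; rewrite /mu mxE.
have [th [t0 t1 hu hv]] := @two_affine R _ _ _ _ c1 c2 c3 c4.
have Ee : Eset mu (th *: e0 + (1 - th) *: e') by apply: Eset_conv.
set e := th *: e0 + (1 - th) *: e'.
have -> : xb + mu = xb + ((mu - e) + e) by rewrite subrK.
case: Ee => Ke eL eN.
apply: inT => //.
- rewrite mulmxBr /mu mulmxDr Ap0 Ae0 add0r; by case: (HKP _ Ke) => ->; rewrite subrr.
- by move=> j jB; rewrite mxBE subr_ge0 eL.
- by move=> j jB Hj; rewrite mxBE eN // subrr.
- rewrite /e g_comb -subr_gt0.
  have -> : th * lin ia (mu - e0) + (1 - th) * lin ia (mu - e') - 1 =
     th * (lin ia (mu - e0) - 1) + (1 - th) * (lin ia (mu - e') - 1) by ring.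
  exact: hu.
- rewrite /e g_comb -subr_gt0.
  have -> : 1 - (th * lin ib (mu - e0) + (1 - th) * lin ib (mu - e')) =
     th * (1 - lin ib (mu - e0)) + (1 - th) * (1 - lin ib (mu - e')) by ring.
  exact: hv.
Qed.
End Main.
Theorem theorem5 (R : realType) (m n : nat) (A : 'M[R]_(m, n))
  (b : 'cV[R]_m) (B : {set 'I_n}) (C : set 'cV[R]_n) :
  \rank A = m ->
  is_basis A B ->
  (forall i, 0 <= xbar A b B i 0) ->
  open C ->
  convex_set (C : set (convex_lmodType 'cV[R]_n)) ->
  ~ closure C (xbar A b B) ->
  recc C `<=` recc (PB A b B) ->
  PB A b B `\` TC A b B C =
    (PB A b B `\` S0C A b B C) `|`
    \bigcup_(k in N2 A b B C) (PB A b B `\` SkC A b B C k).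
Proof.
move=> _ [_ HBasis] _ HO HC ncl Hrec.
have Hxb : ~ C (xbar A b B) by move=> h; apply: ncl; apply: subset_closure.
have HN1 : forall j, N1 A b B C j -> recc C (rbar A B j).
  by move=> j h; exact: (N1_recc HC HO j h).
apply/seteqP; split => x /=.
- move=> [Px nT].
  have HKP : forall d, recc C d -> A *m d = 0 /\ (forall j, j \notin B -> 0 <= d j 0).
    by move=> d h; apply: (PB_recc x d Px (Hrec d h)).
  have [S0x|nS0] := pselect (S0C A b B C x); last by left.
  have [[k [N2k nSk]]|nex] := pselect (exists k, N2 A b B C k /\ ~ SkC A b B C k x).
    by right; exists k.
  exfalso; apply: nT; apply: (@main_incl R m n A b B C Hxb HKP HBasis x S0x) => k N2k.
  have [//|h] := pselect (SkC A b B C k x).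
  by exfalso; apply: nex; exists k.
- case=> [[Px nS0]|[k N2k [Px nSk]]]; split => //.
    by move=> /T_S0.
  by move=> /(@T_Sk R m n A b B C HN1 k x N2k).
Qed.
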